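(* For every $k\ge 1$, the bi-hypergraph obtained from $\mathcal H_{2k}$ by removing the edge $\{v_{2k,1},v_{2k,2},v_{2k,3}\}$ and adding the edges $\{v_{1,j},v_{2k,j+1},v_{2k,j+2}\}$ for all $j\in[3]$ is minimal uncolorable.
   Context: A bi-hypergraph $\mathcal H=(V,E)$ consists of a finite vertex set $V$ and a set $E$ of subsets of $V$, called edges, with no edge contained in another. A mapping $f:V\to\mathbb N$ is a proper coloring of $\mathcal H$ if $1<|f(e)|<|e|$ for every $e\in E$, where $f(e)=\{f(v):v\in e\}$. $\mathcal H$ is colorable if it has a proper coloring, and uncolorable otherwise. A subhypergraph of $\mathcal H$ is a bi-hypergraph $(V',E')$ with $V'\subseteq V$, $E'\subseteq E$; $\mathcal H$ is minimal uncolorable if it is uncolorable but every proper subhypergraph of it is colorable. For $k\ge 2$, $\mathcal H_k$ is the $3$-uniform bi-hypergraph with vertex set $\{v_{i,j}: i\in[k], j\in[3]\}$ (all distinct), with the convention $v_{i,4}=v_{i,1}$, $v_{i,5}=v_{i,2}$, whose edges are the sets $\{v_{i,1},v_{i,2},v_{i,3}\}$ for all $i\in[k]$ and the sets $\{v_{q+1,j},v_{q,j},v_{q,j+t}\}$ for all $q\in[k-1]$, $j\in[3]$, $t\in\{1,2\}$. *)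

(* Defs.v *)
From mathcomp Require Import all_boot.
Set Implicit Arguments. Unset Strict Implicit. Unset Printing Implicit Defensive.

Definition hgraph (T : finType) := ({set T} * {set {set T}})%type.

Definition bihypergraph (T : finType) (H : hgraph T) : Prop :=
  (forall e, e \in H.2 -> e \subset H.1) /\
  (forall e e', e \in H.2 -> e' \in H.2 -> e \subset e' -> e = e').

(* f : V -> nat is a proper coloring if 1 < |f(e)| < |e| for every edge e;
   |f(e)| is the number of distinct values of f on e.
   (Only the values of f on V matter, as edges are subsets of V.) *)
Definition proper_coloring (T : finType) (H : hgraph T) (f : T -> nat) : Prop :=
  forall e, e \in H.2 -> 1 < size (undup [seq f x | x in e]) < #|e|.

Definition colorable (T : finType) (H : hgraph T) : Prop :=
  exists f : T -> nat, proper_coloring H f.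

Definition subhypergraph (T : finType) (H' H : hgraph T) : Prop :=
  bihypergraph H' /\ H'.1 \subset H.1 /\ H'.2 \subset H.2.

Definition minimal_uncolorable (T : finType) (H : hgraph T) : Prop :=
  bihypergraph H /\ ~ colorable H /\
  (forall H', subhypergraph H' H -> H' <> H -> colorable H').

(* Vertices v_{i,j} are encoded (0-based) as pairs (i, j) : 'I_n * 'I_3;
   v_{i,1},v_{i,2},v_{i,3} correspond to j = 0,1,2 and j+t is taken mod 3. *)
Definition sh (j : 'I_3) (t : nat) : 'I_3 :=
  Ordinal (ltn_pmod (j + t) (isT : 0 < 3)).

Definition rowE (n : nat) (i : 'I_n) : {set 'I_n * 'I_3} :=
  [set (i, j) | j : 'I_3].

Definition Hn_edges (n : nat) : {set {set 'I_n * 'I_3}} :=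
  [set rowE i | i : 'I_n] :|:
  [set E | [exists q : 'I_n, exists q' : 'I_n, exists j : 'I_3, exists t : 'I_3,
     [&& val q' == (val q).+1, (val t == 1) || (val t == 2) &
         E == [set (q', j); (q, j); (q, sh j t)]]]].

Definition Hn (n : nat) : hgraph ('I_n * 'I_3)%type := (setT, Hn_edges n).

Definition Hn_mod_edges (n : nat) : {set {set 'I_n * 'I_3}} :=
  (Hn_edges n :\: [set rowE i | i in [pred i : 'I_n | val i == n.-1]]) :|:
  [set E | [exists i0 : 'I_n, exists i1 : 'I_n, exists j : 'I_3,
     [&& val i0 == 0, val i1 == n.-1 &
         E == [set (i0, j); (i1, sh j 1); (i1, sh j 2)]]]].

Definition Hn_mod (n : nat) : hgraph ('I_n * 'I_3)%type := (setT, Hn_mod_edges n).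

(* Main.v *)
Require Import Defs.
From mathcomp Require Import all_boot zify.
Set Implicit Arguments. Unset Strict Implicit. Unset Printing Implicit Defensive.

Definition two3 (a b c : nat) := 1 < size (undup [:: a; b; c]) < 3.

Lemma two3E a b c : two3 a b c = ((a == b) + (b == c) + (a == c) == 1).
Proof.
rewrite /two3 /= !inE.
case: (eqVneq a b) => [<-|ab]; case: (eqVneq a c) => [<-|ac];
  rewrite ?eqxx /= ?inE ?eqxx //=.
- by rewrite eq_sym (negbTE ab).
- by case: eqVneq.
Qed.

Lemma two3_rot a b c : two3 a b c = two3 b c a.
Proof. by rewrite !two3E (eq_sym c a) (eq_sym b a); case: (a==b); case: (b==c); case: (a==c). Qed.
Lemma two3_sw a b c : two3 a b c = two3 a c b.
Proof. by rewrite !two3E (eq_sym c b); case: (a==b); case: (b==c); case: (a==c). Qed.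

Lemma two3_bb s b : two3 s b b -> s != b.
Proof. by rewrite two3E eqxx; case: (s == b). Qed.
Lemma two3_ab s a b : a != b -> two3 s b a -> s != b -> s = a.
Proof.
rewrite two3E => ab + sb; rewrite (negbTE sb) /=; case: (eqVneq s a) => // sa.
case: (eqVneq b a) => // ba; by rewrite ba eqxx in ab.
Qed.
Lemma two3_aaa a : ~~ two3 a a a.
Proof. by rewrite two3E eqxx. Qed.

Lemma cond3 (T : finType) (f : T -> nat) (a b c : T) : a != b -> b != c -> a != c ->
  (1 < size (undup [seq f x | x in [set a; b; c]]) < #|[set a; b; c]|) = two3 (f a) (f b) (f c).
Proof.
move=> ab bc ac.
have -> : #|[set a; b; c]| = 3.
  by rewrite -setUA !cardsU1 cards1 !inE (negbTE ab) (negbTE ac) (negbTE bc).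
rewrite /two3; suff -> : size (undup [seq f x | x in [set a; b; c]]) = size (undup [:: f a; f b; f c]) by [].
apply: perm_size; apply: uniq_perm; rewrite ?undup_uniq // => y.
rewrite !mem_undup; apply/mapP/idP.
  by move=> [x]; rewrite mem_enum !inE -orbA => /or3P[] /eqP-> ->; rewrite ?inE ?eqxx ?orbT.
by rewrite !inE -?orbA => /or3P[] /eqP->; [exists a|exists b|exists c]; rewrite // mem_enum !inE eqxx ?orbT.
Qed.

Definition o0 : 'I_3 := Ordinal (isT : 0 < 3).
Definition o1 : 'I_3 := Ordinal (isT : 1 < 3).
Definition o2 : 'I_3 := Ordinal (isT : 2 < 3).

Ltac ord3 j := case: j => [[|[|[|?]]] ?] //.

Lemma sh11 p : sh (sh p 1) 1 = sh p 2. Proof. by apply/val_inj; ord3 p. Qed.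
Lemma sh12 p : sh (sh p 1) 2 = p. Proof. by apply/val_inj; ord3 p. Qed.
Lemma sh21 p : sh (sh p 2) 1 = p. Proof. by apply/val_inj; ord3 p. Qed.
Lemma sh22 p : sh (sh p 2) 2 = sh p 1. Proof. by apply/val_inj; ord3 p. Qed.
Lemma sh_neq (j t : 'I_3) : (val t == 1) || (val t == 2) -> sh j t != j.
Proof. by ord3 j; ord3 t. Qed.
Lemma sh12_neq (j : 'I_3) : sh j 1 != sh j 2.
Proof. by ord3 j. Qed.

Lemma rowE3 n (i : 'I_n) : rowE i = [set (i,o0); (i,o1); (i,o2)].
Proof.
apply/setP => x; rewrite /rowE !inE; apply/imsetP/idP.
  by move=> [j _ ->]; rewrite !xpair_eqE eqxx /=; ord3 j.
case: x => i' j; rewrite !xpair_eqE -!orbA => /or3P[]/andP[/eqP-> /eqP->]; by eexists.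
Qed.

Lemma rowE_mem n (i i' : 'I_n) j : ((i', j) \in rowE i) = (i' == i).
Proof.
rewrite rowE3 !inE !xpair_eqE; case: (i' == i) => //=; by ord3 j.
Qed.

Lemma rowE_inj n : injective (@rowE n).
Proof.
move=> i i' E; have : (i, o0) \in rowE i' by rewrite -E rowE_mem.
by rewrite rowE_mem => /eqP.
Qed.

Lemma row_in m (i : 'I_m.+1) : val i < m -> rowE i \in Hn_mod_edges m.+1.
Proof.
move=> im; rewrite /Hn_mod_edges /Hn_edges !inE; apply/orP; left.
apply/andP; split.
  apply/imsetP => -[i' /=]; rewrite inE => /eqP Hi /rowE_inj Ei.
  by move: im; rewrite Ei /= Hi ltnn.
by rewrite imset_f.
Qed.

Lemma btw_in m (q q' : 'I_m.+1) (j t : 'I_3) : val q' = (val q).+1 -> (val t == 1) || (val t == 2) ->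
  [set (q', j); (q, j); (q, sh j t)] \in Hn_mod_edges m.+1.
Proof.
move=> qq tt; rewrite /Hn_mod_edges /Hn_edges !inE; apply/orP; left.
apply/andP; split.
  apply/imsetP => -[i' _] E.
  have h1 : (q', j) \in rowE i' by rewrite -E !inE eqxx.
  have h2 : (q, j) \in rowE i' by rewrite -E !inE eqxx ?orbT.
  rewrite !rowE_mem in h1 h2.
  by move: qq; rewrite (eqP h1) (eqP h2) => /n_Sn.
apply/orP; right.
apply/existsP; exists q; apply/existsP; exists q'; apply/existsP; exists j; apply/existsP; exists t.
by rewrite qq eqxx tt eqxx.
Qed.

Lemma mod_in m (i0 i1 : 'I_m.+1) (j : 'I_3) : val i0 = 0 -> val i1 = m ->
  [set (i0, j); (i1, sh j 1); (i1, sh j 2)] \in Hn_mod_edges m.+1.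
Proof.
move=> h0 h1; rewrite /Hn_mod_edges !inE; apply/orP; right.
apply/existsP; exists i0; apply/existsP; exists i1; apply/existsP; exists j.
by rewrite h0 h1 !eqxx.
Qed.

Lemma edgeP m e : e \in Hn_mod_edges m.+1 ->
  [\/ exists2 i : 'I_m.+1, val i < m & e = rowE i,
      exists q q' : 'I_m.+1, exists j t : 'I_3,
         [/\ val q' = (val q).+1, (val t == 1) || (val t == 2) & e = [set (q', j); (q, j); (q, sh j t)]]
    | exists i0 i1 : 'I_m.+1, exists j : 'I_3, [/\ val i0 = 0, val i1 = m & e = [set (i0, j); (i1, sh j 1); (i1, sh j 2)]]].
Proof.
rewrite /Hn_mod_edges /Hn_edges !inE => /orP[/andP[nl /orP[/imsetP[i _ Ei]|]]|].
- apply: Or31; exists i => //.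
  have := ltn_ord i; rewrite ltnS leq_eqVlt => /orP[/eqP Hi|//].
  case/negP: nl; rewrite Ei; apply/imsetP; exists i => //; by rewrite inE /= Hi.
- move=> /existsP[q /existsP[q' /existsP[j /existsP[t /and3P[/eqP h1 h2 /eqP h3]]]]].
  by apply: Or32; exists q, q', j, t.
- move=> /existsP[i0 /existsP[i1 /existsP[j /and3P[/eqP h1 /eqP h2 /eqP h3]]]].
  by apply: Or33; exists i0, i1, j.
Qed.

Lemma row_p (x : 'I_3 -> nat) p : two3 (x o0) (x o1) (x o2) -> two3 (x p) (x (sh p 1)) (x (sh p 2)).
Proof.
have E : forall a b : 'I_3, val a = val b -> x a = x b by move=> a b /val_inj ->.
case: p => [[|[|[|?]]] Hp] //.
- by rewrite (E (sh _ 1) o1) // (E (sh _ 2) o2) // (E (Ordinal Hp) o0).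
- rewrite (E (sh _ 1) o2) // (E (sh _ 2) o0) // (E (Ordinal Hp) o1) //.
  by move=> H; rewrite two3_rot in H.
- rewrite (E (sh _ 1) o0) // (E (sh _ 2) o1) // (E (Ordinal Hp) o2) //.
  by move=> H; rewrite two3_rot two3_rot in H.
Qed.

Lemma base_p (x : 'I_3 -> nat) : two3 (x o0) (x o1) (x o2) ->
  exists p, x p != x (sh p 1) /\ x (sh p 1) = x (sh p 2).
Proof.
have E : forall a b : 'I_3, val a = val b -> x a = x b by move=> a b /val_inj ->.
rewrite two3E.
case: (eqVneq (x o0) (x o1)) => h01; case: (eqVneq (x o1) (x o2)) => h12;
  case: (eqVneq (x o0) (x o2)) => h02 //= _.
- exists o2; rewrite (E (sh _ 1) o0) // (E (sh _ 2) o1) //; split=> //.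
  by rewrite eq_sym.
- exists o0; rewrite (E (sh _ 1) o1) // (E (sh _ 2) o2) //.
- exists o1; rewrite (E (sh _ 1) o2) // (E (sh _ 2) o0) //.
Qed.

Section Pure.
Variables (m : nat) (F : nat -> 'I_3 -> nat).
Hypothesis Hrow : forall i, i < m -> two3 (F i o0) (F i o1) (F i o2).
Hypothesis Hbtw : forall q j (t : 'I_3), q < m -> (val t == 1) || (val t == 2) ->
   two3 (F q.+1 j) (F q j) (F q (sh j t)).
Hypothesis Hmod : forall j, two3 (F 0 j) (F m (sh j 1)) (F m (sh j 2)).

Lemma stepA q p a b : q < m -> a != b -> F q p = a -> F q (sh p 1) = b -> F q (sh p 2) = b ->
  F q.+1 (sh p 1) = a /\ F q.+1 (sh p 2) = a.
Proof.
move=> qm ab h0 h1 h2; split.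
- have := @Hbtw q (sh p 1) o1 qm isT; rewrite sh11 h1 h2 => /two3_bb nb.
  have := @Hbtw q (sh p 1) o2 qm isT; rewrite sh12 h1 h0 => H.
  exact: two3_ab ab H nb.
- have := @Hbtw q (sh p 2) o2 qm isT; rewrite sh22 h1 h2 => /two3_bb nb.
  have := @Hbtw q (sh p 2) o1 qm isT; rewrite sh21 h2 h0 => H.
  exact: two3_ab ab H nb.
Qed.

Lemma stepB q p a b : q.+1 < m -> a != b -> F q p = a -> F q (sh p 1) = b -> F q (sh p 2) = b ->
  F q.+1 p = b.
Proof.
move=> qm ab h0 h1 h2.
have qm' : q < m by apply: ltnW.
have [s1 s2] := stepA qm' ab h0 h1 h2.
have := row_p p (Hrow qm); rewrite s1 s2 => /two3_bb nb.
have := @Hbtw q p o1 qm' isT; rewrite h0 h1 => H.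
by apply: two3_ab H nb; rewrite eq_sym.
Qed.

Lemma pure_uncol : odd m -> False.
Proof.
move=> om.
have m0 : 0 < m by case: m om.
have [p [ab e12]] := base_p (Hrow m0).
set a := F 0 p in ab *; set b := F 0 (sh p 1) in ab e12 *.
have inv : forall i, i < m -> [/\ F i p = (if odd i then b else a),
    F i (sh p 1) = (if odd i then a else b) & F i (sh p 2) = (if odd i then a else b)].
  elim=> [_|i IH im]; first by split.
  have [h0 h1 h2] := IH (ltnW im).
  rewrite /=; case: (odd i) h0 h1 h2 => h0 h1 h2 /=.
  - have ba : b != a by rewrite eq_sym.
    have [s1 s2] := stepA (ltnW im) ba h0 h1 h2.
    by split=> //; apply: (stepB im ba h0 h1 h2).
  - have [s1 s2] := stepA (ltnW im) ab h0 h1 h2.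
    by split=> //; apply: (stepB im ab h0 h1 h2).
have [m' Em] : exists m', m = m'.+1 by case: (m) om => [|m'] //; exists m'.
have mm : m' < m by rewrite Em.
have [h0 h1 h2] := inv m' mm.
have om' : ~~ odd m' by move: om; rewrite Em.
rewrite (negbTE om') in h0 h1 h2.
have [s1 s2] := stepA mm ab h0 h1 h2.
by move: (Hmod p); rewrite Em s1 s2 -/a (negPf (two3_aaa a)).
Qed.
End Pure.

Lemma pn1 n (i i' : 'I_n) (j j' : 'I_3) : i != i' -> (i, j) != (i', j').
Proof. by move=> h; rewrite xpair_eqE (negbTE h). Qed.
Lemma pn2 n (i i' : 'I_n) (j j' : 'I_3) : j != j' -> (i, j) != (i', j').
Proof. by move=> h; rewrite xpair_eqE (negbTE h) andbF. Qed.

Lemma inord_neq m i i' : i <= m -> i' <= m -> i != i' -> (inord i : 'I_m.+1) != inord i'.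
Proof. move=> h h' d; apply/eqP => /(congr1 val) /=; rewrite !inordK // => E; by rewrite E eqxx in d. Qed.

Lemma Sn_neq q : q.+1 != q.
Proof. by rewrite eqn_leq ltnn. Qed.

Lemma uncol m : odd m -> ~ colorable (Hn_mod m.+1).
Proof.
move=> om [f Hf].
pose F i j := f (inord i, j).
have m0 : 0 < m by case: (m) om.
apply: (@pure_uncol m F) om.
- move=> i im.
  have hi : nat_of_ord (inord i : 'I_m.+1) < m by rewrite inordK // ltnW.
  have := Hf _ (@row_in m (inord i) hi).
  by rewrite rowE3 cond3 // pn2.
- move=> q j t qm tt.
  have hq : nat_of_ord (inord q.+1 : 'I_m.+1) = (nat_of_ord (inord q : 'I_m.+1)).+1 by rewrite !inordK // ltnW.
  have := Hf _ (@btw_in m (inord q) (inord q.+1) j t hq tt).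
  rewrite cond3 //; first by apply: pn1; rewrite inord_neq // ?(ltnW qm) // Sn_neq.
  - by apply: pn2; rewrite eq_sym sh_neq.
  - by apply: pn1; rewrite inord_neq // ?(ltnW qm) // Sn_neq.
- move=> j.
  have h0 : nat_of_ord (inord 0 : 'I_m.+1) = 0 by rewrite inordK.
  have h1 : nat_of_ord (inord m : 'I_m.+1) = m by rewrite inordK.
  have := Hf _ (@mod_in m (inord 0) (inord m) j h0 h1).
  rewrite cond3 //; first by apply: pn1; rewrite inord_neq // eq_sym -lt0n.
  - by apply: pn2; rewrite sh12_neq.
  - by apply: pn1; rewrite inord_neq // eq_sym -lt0n.
Qed.

Definition pat (c : nat) (p : 'I_3) (b : bool) (j : 'I_3) : nat := c + (if j == p then b else ~~ b).
Definition mo (j0 t0 : 'I_3) : 'I_3 := sh j0 (3 - t0).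

Lemma P_row c p b : two3 (pat c p b o0) (pat c p b o1) (pat c p b o2).
Proof. rewrite /pat two3E !eqn_add2l; ord3 p; by case: b. Qed.

Lemma P_T1 c p b j (t : 'I_3) : (val t == 1) || (val t == 2) ->
  two3 (pat c p (~~ b) j) (pat c p b j) (pat c p b (sh j t)).
Proof. rewrite /pat two3E !eqn_add2l; ord3 p; ord3 j; ord3 t; by case: b. Qed.

Lemma P_T2 c p (b : bool) j (t : 'I_3) : (val t == 1) || (val t == 2) ->
  two3 (c + b) (pat c p b j) (pat c p b (sh j t)).
Proof. rewrite /pat two3E !eqn_add2l; ord3 p; ord3 j; ord3 t; by case: b. Qed.

Lemma P_T3 x y : x != y -> two3 x y y.
Proof. by rewrite two3E eqxx; case: (x == y). Qed.

Lemma P_T5 j0 t0 b j (t : 'I_3) : (val t0 == 1) || (val t0 == 2) -> (val t == 1) || (val t == 2) ->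
  ~~ ((j == j0) && (t == t0)) ->
  two3 (pat 0 j0 (~~ b) j) (pat 0 (mo j0 t0) b j) (pat 0 (mo j0 t0) b (sh j t)).
Proof. rewrite /pat /mo two3E; ord3 j0; ord3 t0; ord3 j; ord3 t; by case: b. Qed.

Lemma P_M1 j0 j : j != j0 -> two3 (pat 0 j0 false j) (pat 0 j0 true (sh j 1)) (pat 0 j0 true (sh j 2)).
Proof. rewrite /pat two3E; ord3 j0; ord3 j. Qed.

Lemma P_M3 j0 t0 j : (val t0 == 1) || (val t0 == 2) ->
  two3 (pat 0 (mo j0 t0) false j) (pat 0 j0 true (sh j 1)) (pat 0 j0 true (sh j 2)).
Proof. rewrite /pat /mo two3E; ord3 j0; ord3 t0; ord3 j. Qed.

Lemma pat_le1 p b j : pat 0 p b j <= 1.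
Proof. by rewrite /pat; case: (j == p); case: b. Qed.
Lemma pat_ge2 p b j : 2 <= pat 2 p b j.
Proof. by rewrite /pat leq_addr. Qed.

Lemma ord_neqS n (q q' : 'I_n) : val q' = (val q).+1 -> q' != q.
Proof. move=> h; apply/eqP => E; move: h; rewrite E => /eqP; by rewrite eq_sym (negbTE (Sn_neq _)). Qed.

Lemma check m (g : nat -> 'I_3 -> nat) (exR : nat -> bool) (exB : nat -> 'I_3 -> 'I_3 -> bool)
  (exM : 'I_3 -> bool) :
  0 < m ->
  (forall i, i < m -> ~~ exR i -> two3 (g i o0) (g i o1) (g i o2)) ->
  (forall q j (t : 'I_3), q < m -> (val t == 1) || (val t == 2) -> ~~ exB q j t ->
     two3 (g q.+1 j) (g q j) (g q (sh j t))) ->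
  (forall j, ~~ exM j -> two3 (g 0 j) (g m (sh j 1)) (g m (sh j 2))) ->
  forall e, e \in Hn_mod_edges m.+1 ->
   (forall i : 'I_m.+1, exR i -> e != rowE i) ->
   (forall (q q' : 'I_m.+1) j t, val q' = (val q).+1 -> exB q j t -> e != [set (q', j); (q, j); (q, sh j t)]) ->
   (forall (i0 i1 : 'I_m.+1) j, val i0 = 0 -> val i1 = m -> exM j -> e != [set (i0, j); (i1, sh j 1); (i1, sh j 2)]) ->
   1 < size (undup [seq g (val x.1) x.2 | x in e]) < #|e|.
Proof.
move=> m0 HR HB HM e /edgeP[[i im ->]|[q [q' [j [t [qq tt ->]]]]]|[i0 [i1 [j [h0 h1 ->]]]]] nR nB nM.
- case ei : (exR i); first by move: (nR i ei); rewrite eqxx.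
  rewrite rowE3 cond3 ?pn2 //=; apply: HR => //; by rewrite ei.
- case ei : (exB q j t); first by move: (nB q q' j t qq ei); rewrite eqxx.
  rewrite cond3 /=; first (rewrite qq; apply: HB => //; last by rewrite ei).
  + by rewrite -ltnS -qq ltn_ord.
  + by apply: pn1; apply: ord_neqS.
  + by apply: pn2; rewrite eq_sym sh_neq.
  + by apply: pn1; apply: ord_neqS.
- case ei : (exM j); first by move: (nM i0 i1 j h0 h1 ei); rewrite eqxx.
  have d : i0 != i1 by apply/eqP => E; move: h1 m0; rewrite -E h0 => <-.
  rewrite cond3 /= ?h0 ?h1; first (apply: HM; by rewrite ei).
  + by apply: pn1.
  + by apply: pn2; rewrite sh12_neq.
  + by apply: pn1.
Qed.

Definition gR (m i0 : nat) (i : nat) : 'I_3 -> nat :=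
  if i < i0 then pat 0 o0 (odd i) else if i == i0 then (fun _ => nat_of_bool (~~ odd i0))
  else if i < m then pat 2 o0 (odd i) else (fun _ => 2).

Lemma gR_row m i0 i : i < m -> i != i0 -> two3 (gR m i0 i o0) (gR m i0 i o1) (gR m i0 i o2).
Proof.
move=> im ne; rewrite /gR; case: ltnP => _; first exact: P_row.
by rewrite (negbTE ne) im; exact: P_row.
Qed.

Lemma gR_btw m i0 q j (t : 'I_3) : odd m -> q < m -> (val t == 1) || (val t == 2) ->
  two3 (gR m i0 q.+1 j) (gR m i0 q j) (gR m i0 q (sh j t)).
Proof.
move=> om qm tt; rewrite /gR.
case: (ltngtP q.+1 i0) => h.
- rewrite /=; exact: P_T1.
- case: (eqVneq q i0) => [eq|ne].
  + apply: P_T3; case: ifP => _; last by case: (odd i0).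
    apply/eqP => E; have := pat_ge2 o0 (odd q.+1) j; rewrite E; by case: (odd i0).
  + rewrite qm; case: ifP => qm'.
    * exact: P_T1.
    * have oq : odd q = false.
        have Em : m = q.+1 by lia.
        by move: om; rewrite Em /=; case: (odd q).
      rewrite oq; exact: (P_T2 2 o0 false j tt).
- rewrite -h /= negbK; exact: (P_T2 0 o0 (odd q) j tt).
Qed.

Lemma gR_mod m i0 j : i0 < m -> two3 (gR m i0 0 j) (gR m i0 m (sh j 1)) (gR m i0 m (sh j 2)).
Proof.
move=> i0m; rewrite /gR.
have -> : (m < i0) = false by lia.
have -> : (m == i0) = false by lia.
rewrite ltnn; apply: P_T3.
case: ifP => h; first by apply: contraTneq (pat_le1 o0 (odd 0) j) => ->.
have -> : (0 == i0) = true by lia.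
by case: (odd i0).
Qed.

Definition gB (q0 : nat) (j0 t0 : 'I_3) (i : nat) : 'I_3 -> nat :=
  if i <= q0 then pat 0 (mo j0 t0) (odd i) else pat 0 j0 (odd i).

Lemma gB_btw q0 j0 t0 q j (t : 'I_3) : (val t0 == 1) || (val t0 == 2) -> (val t == 1) || (val t == 2) ->
  ~~ ((q == q0) && (j == j0) && (t == t0)) ->
  two3 (gB q0 j0 t0 q.+1 j) (gB q0 j0 t0 q j) (gB q0 j0 t0 q (sh j t)).
Proof.
move=> tt0 tt ne; rewrite /gB; case: (ltngtP q q0) => h /=.
- exact: P_T1.
- exact: P_T1.
- apply: P_T5 => //; move: ne; by rewrite h eqxx.
Qed.

Lemma gB_row q0 j0 t0 i : two3 (gB q0 j0 t0 i o0) (gB q0 j0 t0 i o1) (gB q0 j0 t0 i o2).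
Proof. by rewrite /gB; case: ifP => _; exact: P_row. Qed.

Lemma gB_mod m q0 j0 t0 j : odd m -> q0 < m -> (val t0 == 1) || (val t0 == 2) ->
  two3 (gB q0 j0 t0 0 j) (gB q0 j0 t0 m (sh j 1)) (gB q0 j0 t0 m (sh j 2)).
Proof.
move=> om qm tt0; rewrite /gB leq0n leqNgt qm /= om; exact: P_M3.
Qed.

Definition gM (j0 : 'I_3) (i : nat) : 'I_3 -> nat := pat 0 j0 (odd i).

Lemma col_exists m (e0 : {set 'I_m.+1 * 'I_3}) : odd m -> e0 \in Hn_mod_edges m.+1 ->
  exists f : 'I_m.+1 * 'I_3 -> nat, forall e, e \in Hn_mod_edges m.+1 -> e != e0 ->
  1 < size (undup [seq f x | x in e]) < #|e|.
Proof.
move=> om; have m0 : 0 < m by case: (m) om.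
move=> /edgeP[[i0 i0m ->]|[q0 [q0' [j0 [t0 [qq0 tt0 ->]]]]]|[a0 [a1 [j0 [h0 h1 ->]]]]].
- exists (fun x => gR m i0 (val x.1) x.2) => e He ne.
  apply: (@check m (gR m i0) (fun i => i == i0) (fun _ _ _ => false) (fun _ => false)) => //.
  + by move=> i im; apply: gR_row.
  + by move=> q j t qm tt _; apply: gR_btw.
  + by move=> j _; apply: gR_mod.
  + by move=> i /eqP/val_inj ->.
- exists (fun x => gB q0 j0 t0 (val x.1) x.2) => e He ne.
  apply: (@check m (gB q0 j0 t0) (fun _ => false)
     (fun q j t => (q == q0) && (j == j0) && (t == t0)) (fun _ => false)) => //.
  + by move=> i _ _; apply: gB_row.
  + by move=> q j t qm tt nx; apply: gB_btw.
  + move=> j _; apply: gB_mod => //.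
    have := ltn_ord q0'; rewrite qq0; by [].
  + move=> q q' j t qq /andP[/andP[/eqP/val_inj Eq /eqP Ej] /eqP Et].
    have Eq' : q' = q0' by apply/val_inj; rewrite /= qq qq0 Eq.
    by rewrite Eq Eq' Ej Et.
- exists (fun x => gM j0 (val x.1) x.2) => e He ne.
  apply: (@check m (gM j0) (fun _ => false) (fun _ _ _ => false) (fun j => j == j0)) => //.
  + by move=> i _ _; apply: P_row.
  + by move=> q j t _ tt _; apply: P_T1.
  + move=> j nj; rewrite /gM /= om; exact: P_M1.
  + move=> i0 i1 j h0' h1' /eqP ->.
    have -> : i0 = a0 by apply/val_inj; rewrite /= h0' h0.
    have -> : i1 = a1 by apply/val_inj; rewrite /= h1' h1.
    by [].
Qed.

Lemma card3 (T : finType) (a b c : T) : a != b -> b != c -> a != c -> #|[set a; b; c]| = 3.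
Proof. by move=> ab bc ac; rewrite -setUA !cardsU1 cards1 !inE (negbTE ab) (negbTE ac) (negbTE bc). Qed.

Lemma edge_card m e : 0 < m -> e \in Hn_mod_edges m.+1 -> #|e| = 3.
Proof.
move=> m0 /edgeP[[i im ->]|[q [q' [j [t [qq tt ->]]]]]|[i0 [i1 [j [h0 h1 ->]]]]].
- by rewrite rowE3 card3 // pn2.
- rewrite card3 //.
  + by apply: pn1; apply: ord_neqS.
  + by apply: pn2; rewrite eq_sym sh_neq.
  + by apply: pn1; apply: ord_neqS.
- have d : i0 != i1 by apply/eqP => E; move: h1 m0; rewrite -E h0 => <-.
  rewrite card3 //; [exact: pn1 | apply: pn2; exact: sh12_neq | exact: pn1].
Qed.

Lemma cover m (x : 'I_m.+1 * 'I_3) : exists2 e, e \in Hn_mod_edges m.+1 & x \in e.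
Proof.
case: x => i j.
case: (ltnP i m) => im.
  by exists (rowE i); [apply: row_in | rewrite rowE_mem].
have hi : nat_of_ord i = m by have := ltn_ord i; lia.
exists [set (ord0, sh j 2); (i, sh (sh j 2) 1); (i, sh (sh j 2) 2)].
  exact: mod_in.
by rewrite sh21 !inE eqxx !orbT.
Qed.

Lemma main_m m : odd m -> minimal_uncolorable (Hn_mod m.+1).
Proof.
move=> om; have m0 : 0 < m by case: (m) om.
split; [|split].
- split=> [e _|e e' He He' sub]; first exact: subsetT.
  apply/eqP; rewrite eqEcard sub /= (edge_card m0 He) (edge_card m0 He').
  by [].
- exact: uncol.
- move=> [V' E'] [[Hsub _] [/= HV HE]] neq.
  case: (boolP (Hn_mod_edges m.+1 \subset E')) => sE.
    exfalso; apply: neq.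
    have EE : E' = Hn_mod_edges m.+1 by apply/eqP; rewrite eqEsubset HE sE.
    rewrite /Hn_mod EE; congr pair.
    apply/setP => x; rewrite inE.
    have [e He xe] := cover x.
    have := Hsub e; rewrite /= EE => /(_ He) /subsetP; by apply.
  have [e0 e0E e0n] := subsetPn sE.
  have [f Hf] := col_exists om e0E.
  exists f => e /= He.
  apply: Hf; first exact: (subsetP HE).
  by apply: contraNneq e0n => <-.
Qed.

Theorem mainTheorem15 (k : nat) : 1 <= k -> minimal_uncolorable (Hn_mod (2 * k)).
Proof.
move=> k1.
have E : 2 * k = (2 * k).-1.+1 by lia.
rewrite E; apply: main_m.
case: k k1 {E} => // k' _.
by rewrite mulnS /= mul2n odd_double.
Qed.
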